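(* Let $\Delta$ be a noncommutative discrete valuation ring with uniformiser $\pi$ and finite residue field, let $D$ be its classical division ring of fractions, and let $r\ge1$, $\Lambda=\mathrm{M}_r(\Delta)$ and $A=\mathrm{M}_r(D)$. For $x\in\Lambda$ put $\mathcal{O}(x)=(\Lambda^\times x+\pi\Lambda)\cap A^\times$, a subset of $\Lambda\cap A^\times$ stable under left multiplication by $\Lambda^\times$. Let $y\in\Lambda$. Then for any $a,b\in\Lambda^\times$ and $c\in\pi\Lambda$, $$\sum_{x\in \Lambda^\times\backslash \mathcal{O}(y)}v^{\ell({}_{\Lambda}\Lambda/\Lambda x)}=\sum_{x\in \Lambda^\times\backslash \mathcal{O}(ayb+c)}v^{\ell({}_{\Lambda}\Lambda/\Lambda x)}$$ as formal power series in $v$, where each sum runs over the orbits of $\Lambda^\times$ acting by left multiplication (choosing one representative $x$ per orbit) and $\ell({}_\Lambda\Lambda/\Lambda x)$ is the length of the left $\Lambda$-module $\Lambda/\Lambda x$.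
   Context: A noncommutative discrete valuation ring is a domain $\Delta$ with a normal regular element $\pi$ (uniformiser) such that $\pi\Delta=\Delta\pi$ is the Jacobson radical and $\Delta/(\pi)$ is a division ring, here assumed finite. $\Lambda^\times$, $A^\times$ denote unit groups, and $\pi\Lambda$ is the set of matrices with all entries in $\pi\Delta$. *)

(* Defs.v *)
From HB Require Import structures.
From mathcomp Require Import all_boot all_algebra.
Set Implicit Arguments. Unset Strict Implicit. Unset Printing Implicit Defensive.
Import GRing.Theory.
Local Open Scope ring_scope.

(* x lies in the two-sided ideal p R (= R p since p is normal) *)
Definition in_pi (R : unitRingType) (p x : R) : Prop := exists t : R, x = p * t.

Definition is_domain (R : unitRingType) : Prop :=
  forall a b : R, a * b = 0 -> a = 0 \/ b = 0.

Definition normal_elt (R : unitRingType) (p : R) : Prop :=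
  (forall a : R, exists b : R, p * a = b * p) /\
  (forall a : R, exists b : R, a * p = p * b).

Definition regular_elt (R : unitRingType) (p : R) : Prop :=
  forall a : R, (p * a = 0 -> a = 0) /\ (a * p = 0 -> a = 0).

Definition in_jacobson (R : unitRingType) (x : R) : Prop :=
  forall y : R, (1 - y * x) \is a GRing.unit.

Definition residue_division (R : unitRingType) (p : R) : Prop :=
  ~ in_pi p 1 /\
  forall x : R, ~ in_pi p x ->
    exists y : R, in_pi p (x * y - 1) /\ in_pi p (y * x - 1).

Definition residue_finite (R : unitRingType) (p : R) : Prop :=
  exists s : seq R, forall x : R, exists2 y, y \in s & in_pi p (x - y).

Definition pi_separated (R : unitRingType) (p : R) : Prop :=
  forall x : R, (forall n : nat, in_pi (p ^+ n) x) -> x = 0.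

Definition ncDVR (R : unitRingType) (p : R) : Prop :=
  is_domain R /\ normal_elt p /\ regular_elt p /\
  (forall x : R, in_jacobson x <-> in_pi p x) /\
  residue_division p /\ residue_finite p /\ pi_separated p.

Definition division_ring (D : unitRingType) : Prop :=
  forall d : D, d != 0 -> d \is a GRing.unit.

Definition classical_fractions (R D : unitRingType) (f : R -> D) : Prop :=
  [/\ injective f,
      (forall d : D, exists a s : R, s != 0 /\ d = f a * (f s)^-1) &
      (forall d : D, exists a s : R, s != 0 /\ d = (f s)^-1 * f a)].

Definition mx_unit (R : unitRingType) (r : nat) (X : 'M[R]_r) : Prop :=
  exists Y : 'M[R]_r, X *m Y = 1%:M /\ Y *m X = 1%:M.

Definition mx_unit_in (R D : unitRingType) (f : R -> D) (r : nat)
  (X : 'M[R]_r) : Prop :=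
  exists Y : 'M[D]_r, map_mx f X *m Y = 1%:M /\ Y *m map_mx f X = 1%:M.

Definition in_piM (R : unitRingType) (p : R) (r : nat) (X : 'M[R]_r) : Prop :=
  forall i j, in_pi p (X i j).

Definition Oset (R D : unitRingType) (p : R) (f : R -> D) (r : nat)
  (y : 'M[R]_r) : 'M[R]_r -> Prop :=
  fun x => (exists u c : 'M[R]_r, [/\ mx_unit u, in_piM p c & x = u *m y + c])
           /\ mx_unit_in f x.

Definition is_left_ideal (R : unitRingType) (r : nat) (L : 'M[R]_r -> Prop) :=
  [/\ L 0, (forall a b, L a -> L b -> L (a + b)) &
      (forall m a, L a -> L (m *m a))].

Definition lideal (R : unitRingType) (r : nat) (x : 'M[R]_r) : 'M[R]_r -> Prop :=
  fun z => exists m : 'M[R]_r, z = m *m x.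

Definition strict_sub (T : Type) (L L' : T -> Prop) : Prop :=
  (forall x, L x -> L' x) /\ exists x, L' x /\ ~ L x.

(* a chain L = c_0 < c_1 < ... < c_k = Lambda of left ideals, i.e. a chain of
   submodules of the left module Lambda / L of length k *)
Definition lchain (R : unitRingType) (r : nat) (L : 'M[R]_r -> Prop) (k : nat) :=
  exists c : nat -> 'M[R]_r -> Prop,
    [/\ (forall x, c 0%N x <-> L x), (forall x, c k x),
        (forall i, (i <= k)%N -> is_left_ideal (c i)) &
        (forall i, (i < k)%N -> strict_sub (c i) (c i.+1))].

Definition length_is (R : unitRingType) (r : nat) (L : 'M[R]_r -> Prop) (n : nat) :=
  lchain L n /\ forall m, lchain L m -> (m <= n)%N.

Definition orbit (R : unitRingType) (r : nat) (x : 'M[R]_r) : 'M[R]_r -> Prop :=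
  fun z => exists u : 'M[R]_r, mx_unit u /\ z = u *m x.

(* the set of Lambda^x-orbits in S whose representatives x have
   length(Lambda / Lambda x) = n; its cardinality is the coefficient of v^n *)
Definition orbits_len (R : unitRingType) (r : nat) (S : 'M[R]_r -> Prop) (n : nat)
  : ('M[R]_r -> Prop) -> Prop :=
  fun O => exists x, [/\ S x, length_is (lideal x) n & O = orbit x].

Definition equipotent (T U : Type) (A : T -> Prop) (B : U -> Prop) : Prop :=
  exists g : T -> U,
    [/\ (forall x, A x -> B (g x)),
        (forall x y, A x -> A y -> g x = g y -> x = y) &
        (forall z, B z -> exists x, A x /\ g x = z)].

(* Main.v *)
From mathcomp Require Import all_boot all_algebra.
Require Import Defs.
From Stdlib Require Import FunctionalExtensionality PropExtensionality.
Set Implicit Arguments. Unset Strict Implicit.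
Import GRing.Theory.
Local Open Scope ring_scope.

Section Aux.
Variable R : unitRingType.
Variable p : R.
Hypothesis Hn : normal_elt p.

Lemma in_pi0 : in_pi p 0. Proof. by exists 0; rewrite mulr0. Qed.
Lemma in_piD x y : in_pi p x -> in_pi p y -> in_pi p (x + y).
Proof. by move=> [s ->] [t ->]; exists (s + t); rewrite mulrDr. Qed.
Lemma in_piN x : in_pi p x -> in_pi p (- x).
Proof. by move=> [s ->]; exists (- s); rewrite mulrN. Qed.
Lemma in_piMl s x : in_pi p x -> in_pi p (s * x).
Proof.
move=> [t ->]; have [b Hb] := (proj2 Hn) s.
by exists (b * t); rewrite mulrA Hb mulrA.
Qed.
Lemma in_piMr s x : in_pi p x -> in_pi p (x * s).
Proof. by move=> [t ->]; exists (t * s); rewrite mulrA. Qed.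

Variable r : nat.
Implicit Types (x y c : 'M[R]_r).

Lemma in_piM_D x y : in_piM p x -> in_piM p y -> in_piM p (x + y).
Proof. by move=> Hx Hy i j; rewrite mxE; apply: in_piD. Qed.
Lemma in_piM_N x : in_piM p x -> in_piM p (- x).
Proof. by move=> Hx i j; rewrite mxE; apply: in_piN. Qed.
Lemma in_piM_Ml (M : 'M[R]_r) x : in_piM p x -> in_piM p (M *m x).
Proof.
move=> Hx i j; rewrite mxE.
apply: (big_ind (in_pi p)); [exact: in_pi0 | exact: in_piD |].
by move=> k _; apply: in_piMl.
Qed.
Lemma in_piM_Mr (M : 'M[R]_r) x : in_piM p x -> in_piM p (x *m M).
Proof.
move=> Hx i j; rewrite mxE.
apply: (big_ind (in_pi p)); [exact: in_pi0 | exact: in_piD |].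
by move=> k _; apply: in_piMr.
Qed.
End Aux.

Lemma mx_unitM (R : unitRingType) r (u v : 'M[R]_r) :
  mx_unit u -> mx_unit v -> mx_unit (u *m v).
Proof.
move=> [u' [H1 H2]] [v' [H3 H4]]; exists (v' *m u'); split.
  by rewrite mulmxA -(mulmxA u) H3 mulmx1 H1.
by rewrite mulmxA -(mulmxA v') H2 mulmx1 H4.
Qed.

Section Main.
Variables (R D : unitRingType) (p : R) (f : {rmorphism R -> D}) (r : nat).
Hypothesis Hn : normal_elt p.
Implicit Types (x y c a b : 'M[R]_r).

Lemma Oset_L1 a a' c y x : a *m a' = 1%:M -> a' *m a = 1%:M -> in_piM p c ->
  Oset p f y x <-> Oset p f (a *m y + c) x.
Proof.
move=> H1 H2 Hc; split.
  move=> [[u [c0 [Hu Hc0 ->]]] Hi]; split=> //.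
  exists (u *m a'), (c0 - u *m a' *m c); split.
  - by apply: mx_unitM=> //; exists a.
  - apply: in_piM_D=> //; apply: in_piM_N=> //; exact: in_piM_Ml.
  rewrite mulmxDr !mulmxA -(mulmxA u a' a) H2 mulmx1.
  by rewrite [c0 - _]addrC addrA addrK.
move=> [[u [c0 [Hu Hc0 ->]]] Hi]; split=> //.
exists (u *m a), (u *m c + c0); split.
- by apply: mx_unitM=> //; exists a'.
- apply: in_piM_D=> //; exact: in_piM_Ml.
by rewrite mulmxDr mulmxA addrA.
Qed.

Lemma Oset_L2 b b' y x : b *m b' = 1%:M -> b' *m b = 1%:M ->
  Oset p f y x -> Oset p f (y *m b) (x *m b).
Proof.
move=> H1 H2 [[u [c0 [Hu Hc0 ->]]] [Y [HY1 HY2]]]; split.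
  exists u, (c0 *m b); split=> //; first exact: in_piM_Mr.
  by rewrite mulmxDl mulmxA.
exists (map_mx f b' *m Y); split.
  by rewrite map_mxM mulmxA -(mulmxA _ (map_mx f b)) -map_mxM H1 map_mx1 mulmx1.
rewrite map_mxM -mulmxA (mulmxA Y) HY2 mul1mx -map_mxM H2 map_mx1 //.
Qed.
End Main.

Section Len.
Variables (R : unitRingType) (r : nat).
Implicit Types (x y b : 'M[R]_r).

Lemma lchain_transfer b b' (L L' : 'M[R]_r -> Prop) k :
  b *m b' = 1%:M -> (forall z, L' z <-> L (z *m b')) -> lchain L k -> lchain L' k.
Proof.
move=> H1 HL [c [C0 Ck Ci Cs]].
exists (fun i z => c i (z *m b')); split.
- by move=> z; rewrite HL C0.
- by move=> z; apply: Ck.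
- move=> i Hi; have [I0 ID IM] := Ci i Hi; split.
  + by rewrite mul0mx.
  + by move=> u v Hu Hv; rewrite mulmxDl; apply: ID.
  + by move=> m u Hu; rewrite -mulmxA; apply: IM.
- move=> i Hi; have [Hs [z [Hz1 Hz2]]] := Cs i Hi; split.
  + by move=> z0; apply: Hs.
  + by exists (z *m b); rewrite -mulmxA H1 mulmx1.
Qed.

Lemma length_transfer b b' (L L' : 'M[R]_r -> Prop) n :
  b *m b' = 1%:M -> b' *m b = 1%:M -> (forall z, L' z <-> L (z *m b')) ->
  length_is L n -> length_is L' n.
Proof.
move=> H1 H2 HL [Hc Hm]; split; first exact: (lchain_transfer H1 HL Hc).
move=> m Hm'; apply: Hm; apply: (lchain_transfer H2 _ Hm')=> z.
by rewrite HL -mulmxA H1 mulmx1.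
Qed.

Lemma lideal_mul b b' x z : b *m b' = 1%:M -> b' *m b = 1%:M ->
  lideal (x *m b) z <-> lideal x (z *m b').
Proof.
move=> H1 H2; split.
  by move=> [m ->]; exists m; rewrite -!mulmxA H1 mulmx1.
move=> [m Hm]; exists m; rewrite mulmxA -Hm -mulmxA H2 mulmx1 //.
Qed.

Lemma orbit_mul b b' x : b *m b' = 1%:M -> b' *m b = 1%:M ->
  (fun z => orbit x (z *m b')) = orbit (x *m b).
Proof.
move=> H1 H2; apply: functional_extensionality => z.
apply: propositional_extensionality; split.
  move=> [u [Hu Hm]]; exists u; split=> //.
  by rewrite mulmxA -Hm -mulmxA H2 mulmx1.
by move=> [u [Hu ->]]; exists u; split=> //; rewrite -!mulmxA H1 mulmx1.
Qed.
End Len.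

Theorem propositionB3 (R : unitRingType) (p : R) (D : unitRingType)
    (f : {rmorphism R -> D}) (r : nat) :
  (0 < r)%N -> ncDVR p -> division_ring D -> classical_fractions f ->
  forall y a b c : 'M[R]_r,
    mx_unit a -> mx_unit b -> in_piM p c ->
    forall n : nat,
      equipotent (orbits_len (Oset p f y) n)
                 (orbits_len (Oset p f (a *m y *m b + c)) n).
Proof.
move=> _ [_ [Hn _]] _ _ y a b c [a' [Ha1 Ha2]] [b' [Hb1 Hb2]] Hc n.
have HO : forall x, Oset p f (a *m y *m b + c) x <-> Oset p f (y *m b) x.
  by move=> x; rewrite -mulmxA; symmetry; apply: (Oset_L1 f Hn _ _ Ha1 Ha2 Hc).
exists (fun O z => O (z *m b')); split.
- move=> O [x [Hx Hl ->]]; exists (x *m b); split.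
  + by apply/HO; apply: (Oset_L2 Hb1 Hb2).
  + by apply: (length_transfer Hb1 Hb2 _ Hl)=> z; apply: lideal_mul.
  + exact: orbit_mul.
- move=> O1 O2 _ _ H; apply: functional_extensionality => z.
  have := congr1 (fun F => F (z *m b)) H; rewrite /= -mulmxA Hb1 mulmx1 //.
- move=> O' [x' [Hx Hl ->]]; exists (orbit (x' *m b')); split.
    exists (x' *m b'); split=> //.
    + have := Oset_L2 Hb2 Hb1 (proj1 (HO x') Hx).
      by rewrite -mulmxA Hb1 mulmx1.
    + by apply: (length_transfer Hb2 Hb1 _ Hl)=> z; apply: lideal_mul.
  rewrite (orbit_mul _ Hb1 Hb2) -mulmxA Hb2 mulmx1 //.
Qed.
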